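(* Let $A\subseteq\mathbb{R}^n$ and $B\subseteq\mathbb{R}^m$. Let $f:A\times B\to\mathbb{R}$ be continuous, with $f(a,\cdot)$ $\mu$-strongly concave for every $a\in A$ and $f$ $L$-Lipschitz on $A\times B$, and let $g:A\rightrightarrows B$ be an $L'$-Hausdorff Lipschitz continuous correspondence with non-empty, convex, compact values. Define $f^*(a)=\max_{b\in g(a)}f(a,b)$ and $g^*(a)=\arg\max_{b\in g(a)}f(a,b)$. Then $f^*$ is continuous and $g^*$ is an upper semi-continuous, non-empty, single-valued correspondence, i.e. a continuous function. Moreover $f^*$ is $(L+L L')$-Lipschitz continuous, and $g^*$ is $\big(L'+2\sqrt{4/\mu}\sqrt{L+LL'}\big)$-$(1/2)$-Hölder continuous for sufficiently small differences, i.e. $\|g^*(a_1)-g^*(a_2)\|\le\big(L'+2\sqrt{4/\mu}\sqrt{L+LL'}\big)\|a_1-a_2\|^{1/2}$ whenever $\|a_1-a_2\|$ is sufficiently small.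
   Context: $g$ is $L'$-Hausdorff Lipschitz if $d_H(g(a_1),g(a_2))\le L'\|a_1-a_2\|$, where $d_H$ is the Hausdorff distance. A correspondence $g^*$ is upper semi-continuous at $a_0$ if for every open $V\supseteq g^*(a_0)$ there is a neighborhood $U$ of $a_0$ with $g^*(a)\subseteq V$ for all $a\in U$. $f(a,\cdot)$ is $\mu$-strongly concave if $-f(a,\cdot)-\frac{\mu}{2}\|\cdot\|^2$ is convex... equivalently $f(a,\tfrac{x+y}{2})\ge\tfrac{f(a,x)+f(a,y)}{2}+\tfrac{\mu}{8}\|x-y\|^2$. *)

(* Defs.v *)
From HB Require Import structures.
From mathcomp Require Import all_boot all_order all_algebra.
From mathcomp Require Import all_classical all_reals all_analysis.
Set Implicit Arguments. Unset Strict Implicit. Unset Printing Implicit Defensive.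
Import Order.TTheory GRing.Theory Num.Theory.
Import numFieldNormedType.Exports.
Local Open Scope classical_set_scope.
Local Open Scope ring_scope.

Section Defs.
Variable R : realType.

Definition enorm (n : nat) (v : 'rV[R]_n) : R :=
  Num.sqrt (\sum_(i < n) (v ord0 i) ^+ 2).

Definition pnorm (n m : nat) (a : 'rV[R]_n) (b : 'rV[R]_m) : R :=
  Num.sqrt (enorm a ^+ 2 + enorm b ^+ 2).

(* h is mu-strongly concave on B: -h - mu/2 ||.||^2 is convex on B, i.e. *)
Definition strongly_concave_on (m : nat) (B : set 'rV[R]_m)
    (h : 'rV[R]_m -> R) (mu : R) : Prop :=
  forall x y (t : R), B x -> B y -> 0 <= t <= 1 -> B (t *: x + (1 - t) *: y) ->
    t * h x + (1 - t) * h y + mu / 2 * t * (1 - t) * (enorm (x - y)) ^+ 2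
      <= h (t *: x + (1 - t) *: y).

Definition point_set_dist (m : nat) (x : 'rV[R]_m) (Y : set 'rV[R]_m) : R :=
  inf [set enorm (x - y) | y in Y].

Definition hausdorff_dist (m : nat) (X Y : set 'rV[R]_m) : R :=
  Num.max (sup [set point_set_dist x Y | x in X])
          (sup [set point_set_dist y X | y in Y]).

Definition hausdorff_lipschitz (n m : nat) (A : set 'rV[R]_n)
    (g : 'rV[R]_n -> set 'rV[R]_m) (L' : R) : Prop :=
  forall a1 a2, A a1 -> A a2 ->
    hausdorff_dist (g a1) (g a2) <= L' * enorm (a1 - a2).

Definition fstar (n m : nat) (f : 'rV[R]_n -> 'rV[R]_m -> R)
    (g : 'rV[R]_n -> set 'rV[R]_m) (a : 'rV[R]_n) : R :=
  sup [set f a b | b in g a].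

Definition gstar (n m : nat) (f : 'rV[R]_n -> 'rV[R]_m -> R)
    (g : 'rV[R]_n -> set 'rV[R]_m) (a : 'rV[R]_n) : set 'rV[R]_m :=
  [set b | g a b /\ forall b', g a b' -> f a b' <= f a b].

Definition usc_at (n m : nat) (A : set 'rV[R]_n) (G : 'rV[R]_n -> set 'rV[R]_m)
    (a0 : 'rV[R]_n) : Prop :=
  forall V : set 'rV[R]_m, open V -> G a0 `<=` V ->
    exists2 d : R, 0 < d & forall a, A a -> enorm (a - a0) < d -> G a `<=` V.

Definition rcont_within (n : nat) (A : set 'rV[R]_n) (h : 'rV[R]_n -> R)
    (a0 : 'rV[R]_n) : Prop :=
  forall e : R, 0 < e -> exists2 d : R, 0 < d &
    forall a, A a -> enorm (a - a0) < d -> `|h a - h a0| < e.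

Definition vcont_within (n m : nat) (A : set 'rV[R]_n)
    (h : 'rV[R]_n -> 'rV[R]_m) (a0 : 'rV[R]_n) : Prop :=
  forall e : R, 0 < e -> exists2 d : R, 0 < d &
    forall a, A a -> enorm (a - a0) < d -> enorm (h a - h a0) < e.

Definition cont2_within (n m : nat) (A : set 'rV[R]_n) (B : set 'rV[R]_m)
    (f : 'rV[R]_n -> 'rV[R]_m -> R) (a0 : 'rV[R]_n) (b0 : 'rV[R]_m) : Prop :=
  forall e : R, 0 < e -> exists2 d : R, 0 < d &
    forall a b, A a -> B b -> pnorm (a - a0) (b - b0) < d ->
      `|f a b - f a0 b0| < e.

End Defs.

(* Main.v *)
Require Import Defs.
From HB Require Import structures.
From mathcomp Require Import all_boot all_order all_algebra.
From mathcomp Require Import all_classical all_reals all_analysis.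
From mathcomp Require Import ring lra.
Import Order.TTheory GRing.Theory Num.Theory.
Import numFieldNormedType.Exports.
Local Open Scope classical_set_scope.
Local Open Scope ring_scope.

Set Implicit Arguments. Unset Strict Implicit.
Lemma mid_in (R : realType) m (Y : set 'rV[R]_m) x y : convex_set Y -> Y x -> Y y ->
  Y (2^-1 *: x + (1 - 2^-1) *: y).
Proof.
move=> cY Yx Yy.
have h0 : (0:R) <= 2^-1 by rewrite invr_ge0.
have h1 : (2:R)^-1 <= 1 by rewrite invf_le1 // ler1n.
have := cY x y (Itv01 h0 h1).
rewrite !inE => /(_ Yx Yy).
done.
Qed.

Section E.
Variable R : realType.

Lemma cauchy_schwarz m (x y : 'I_m -> R) :
  (\sum_i x i * y i) ^+ 2 <= (\sum_i x i ^+ 2) * (\sum_i y i ^+ 2).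
Proof.
have H : \sum_i \sum_j (x i * y j - x j * y i) ^+ 2 =
   (\sum_i x i ^+ 2) * (\sum_i y i ^+ 2) + (\sum_i y i ^+ 2) * (\sum_i x i ^+ 2)
   - 2 * ((\sum_i x i * y i) * (\sum_i x i * y i)).
  rewrite !mulr_suml mulr_sumr -big_split -sumrB /=.
  apply: eq_bigr => i _.
  rewrite !mulr_sumr -big_split -sumrB /=.
  apply: eq_bigr => j _.
  ring.
have : 0 <= \sum_i \sum_j (x i * y j - x j * y i) ^+ 2.
  by apply: sumr_ge0 => i _; apply: sumr_ge0 => j _; exact: sqr_ge0.
rewrite H mulrC expr2; lra.
Qed.

Lemma sumsq_ge0 m (v : 'rV[R]_m) : 0 <= \sum_i v ord0 i ^+ 2.
Proof. by apply: sumr_ge0 => i _; exact: sqr_ge0. Qed.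

Lemma enorm_ge0 m (v : 'rV[R]_m) : 0 <= enorm v.
Proof. exact: sqrtr_ge0. Qed.

Lemma enorm_sq m (v : 'rV[R]_m) : enorm v ^+ 2 = \sum_i v ord0 i ^+ 2.
Proof. by rewrite /enorm sqr_sqrtr // sumsq_ge0. Qed.

Lemma enormN m (v : 'rV[R]_m) : enorm (- v) = enorm v.
Proof. by rewrite /enorm; congr Num.sqrt; apply: eq_bigr => i _; rewrite mxE sqrrN. Qed.

Lemma enormB m (u v : 'rV[R]_m) : enorm (u - v) = enorm (v - u).
Proof. by rewrite -enormN opprB. Qed.

Lemma enorm0 m : enorm (0 : 'rV[R]_m) = 0.
Proof. by rewrite /enorm big1 ?sqrtr0 // => i _; rewrite mxE expr0n. Qed.

Lemma enorm_eq0 m (v : 'rV[R]_m) : enorm v = 0 -> v = 0.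
Proof.
move=> h; have : \sum_i v ord0 i ^+ 2 = 0 by rewrite -enorm_sq h expr0n.
move/eqP; rewrite psumr_eq0 => [/allP H|i _]; last exact: sqr_ge0.
apply/rowP => i; rewrite mxE; apply/eqP; rewrite -sqrf_eq0.
exact: (implyP (H i (mem_index_enum _))).
Qed.

Lemma le_sq_le (a b : R) : 0 <= a -> 0 <= b -> a ^+ 2 <= b ^+ 2 -> a <= b.
Proof. by move=> a0 b0; rewrite ler_sqr. Qed.

Lemma enormD m (u v : 'rV[R]_m) : enorm (u + v) <= enorm u + enorm v.
Proof.
apply: le_sq_le; [exact: enorm_ge0| by rewrite addr_ge0 // enorm_ge0|].
rewrite sqrrD !enorm_sq.
have -> : \sum_i (u + v) ord0 i ^+ 2 = \sum_i u ord0 i ^+ 2 + \sum_i v ord0 i ^+ 2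
   + 2 * \sum_i u ord0 i * v ord0 i.
  rewrite mulr_sumr -!big_split; apply: eq_bigr => i _; rewrite mxE /=; ring.
have CS := cauchy_schwarz (fun i => u ord0 i) (fun i => v ord0 i).
have : \sum_i u ord0 i * v ord0 i <= enorm u * enorm v.
  apply: (le_trans (ler_norm _)); apply: le_sq_le => //.
    by rewrite mulr_ge0 // enorm_ge0.
  by rewrite real_normK ?num_real // exprMn !enorm_sq.
rewrite -mulr_natr; lra.
Qed.

Lemma enorm_tri m (a b c : 'rV[R]_m) : enorm (a - c) <= enorm (a - b) + enorm (b - c).
Proof. by rewrite (_ : a - c = (a - b) + (b - c)) ?enormD // addrA subrK. Qed.

Lemma entry_le m (v : 'rV[R]_m) i : `|v ord0 i| <= enorm v.
Proof.
apply: le_sq_le => //; first exact: enorm_ge0.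
rewrite real_normK ?num_real // enorm_sq (bigD1 i) //= lerDl.
by apply: sumr_ge0 => j _; exact: sqr_ge0.
Qed.

Lemma mxnorm_le m (v : 'rV[R]_m) : `|v| <= enorm v.
Proof.
rewrite -[`|v|]/(mx_norm v) mx_normrE; apply/bigmax_leP; split; first exact: enorm_ge0.
by move=> [i j] _ /=; rewrite ord1; exact: entry_le.
Qed.

Lemma enorm_le_mx m (v : 'rV[R]_m) : enorm v <= m.+1%:R * `|v|.
Proof.
apply: le_sq_le; [exact: enorm_ge0| by rewrite mulr_ge0 //|].
rewrite enorm_sq exprMn.
have hi : forall i, v ord0 i ^+ 2 <= `|v| ^+ 2.
  move=> i; rewrite -real_normK ?num_real //; rewrite lerXn2r ?nnegrE //.
  rewrite -[`|v|]/(mx_norm v) mx_normrE; exact: (le_bigmax _ _ (ord0, i)).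
apply: (le_trans (ler_sum _ (fun i _ => hi i))).
rewrite sumr_const card_ord -[_ *+ m]mulr_natl ler_wpM2r ?sqr_ge0 //.
by rewrite -natrX ler_nat (leq_trans (leqnSn m)) // -{1}(expn1 m.+1) leq_pexp2l.
Qed.

Lemma pnorm_le n m (u : 'rV[R]_n) (v : 'rV[R]_m) : pnorm u v <= enorm u + enorm v.
Proof.
apply: le_sq_le; [exact: sqrtr_ge0| by rewrite addr_ge0 // enorm_ge0|].
rewrite /pnorm sqr_sqrtr ?addr_ge0 ?sqr_ge0 // sqrrD.
have := mulr_ge0 (enorm_ge0 u) (enorm_ge0 v); rewrite -mulr_natr; lra.
Qed.

Lemma pnorm0l n m (v : 'rV[R]_m) : pnorm (0 : 'rV[R]_n) v = enorm v.
Proof. by rewrite /pnorm enorm0 expr0n add0r sqrtr_sqr ger0_norm // enorm_ge0. Qed.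

Lemma within_cont m (K : set 'rV[R]_m) (h : 'rV[R]_m -> R) :
 (forall x, K x -> forall e, 0 < e -> exists2 d, 0 < d &
    forall y, K y -> enorm (y - x) < d -> `|h y - h x| < e) ->
 {within K, continuous h}.
Proof.
move=> H; apply/subspace_continuousP => x Kx.
apply/cvgrPdist_lt => e e0.
have [d d0 Hd] := H x Kx e e0.
rewrite /within /=; apply/nbhs_ballP.
exists (d / m.+1%:R); first by rewrite /= divr_gt0.
move=> y bxy Ky; rewrite distrC; apply: Hd => //.
move: bxy; rewrite -ball_normE /= => bxy.
apply: (le_lt_trans (enorm_le_mx _)); rewrite distrC.
have m0 : (0:R) < m.+1%:R by rewrite ltr0Sn.
by rewrite mulrC -ltr_pdivlMr.
Qed.
Lemma attain_max m (Y : set 'rV[R]_m) (h : 'rV[R]_m -> R) :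
  Y !=set0 -> compact Y ->
  (forall x, Y x -> forall e, 0 < e -> exists2 d, 0 < d &
    forall y, Y y -> enorm (y - x) < d -> `|h y - h x| < e) ->
  exists2 b, Y b & forall y, Y y -> h y <= h b.
Proof.
move=> Y0 cY hc; have [c cY' H] := EVT_max_rV Y0 cY (within_cont hc).
exists c; first by rewrite inE in cY'.
by move=> y Yy; apply: H; rewrite inE.
Qed.

Lemma attain_min_dist m (Y : set 'rV[R]_m) x :
  Y !=set0 -> compact Y ->
  exists2 b, Y b & forall y, Y y -> enorm (x - b) <= enorm (x - y).
Proof.
move=> Y0 cY.
have hc : forall z, Y z -> forall e, 0 < e -> exists2 d, 0 < d &
    forall y, Y y -> enorm (y - z) < d -> `|- enorm (x - y) - - enorm (x - z)| < e.
  move=> z _ e e0; exists e => // y _ hy.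
  have h1 := enorm_tri x y z; have h2 := enorm_tri x z y.
  rewrite [enorm (z - y)]enormB in h2.
  rewrite ltr_norml; apply/andP; split; lra.
have [c Yc H] := attain_max Y0 cY hc.
by exists c => // y Yy; have := H y Yy; rewrite lerN2.
Qed.

Lemma compact_enorm_bound m (Y : set 'rV[R]_m) :
  compact Y -> exists M, forall y, Y y -> enorm y <= M.
Proof.
move=> /compact_bounded [M [_ HM]].
exists (m.+1%:R * (M + 1)) => y Yy.
apply: (le_trans (enorm_le_mx _)); rewrite ler_wpM2l //.
by apply: (HM (M + 1)) => //; rewrite ltrDl.
Qed.
End E.

Theorem mainTheorem16 (R : realType) (n m : nat)
  (A : set 'rV[R]_n) (B : set 'rV[R]_m)
  (f : 'rV[R]_n -> 'rV[R]_m -> R) (g : 'rV[R]_n -> set 'rV[R]_m)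
  (mu L L' : R) :
  0 < mu -> 0 <= L -> 0 <= L' ->
  (forall a b, A a -> B b -> cont2_within A B f a b) ->
  (forall a, A a -> strongly_concave_on B (f a) mu) ->
  (forall a1 a2 b1 b2, A a1 -> A a2 -> B b1 -> B b2 ->
     `|f a1 b1 - f a2 b2| <= L * pnorm (a1 - a2) (b1 - b2)) ->
  (forall a, A a -> g a `<=` B) ->
  (forall a, A a -> g a !=set0 /\ convex_set (g a) /\ compact (g a)) ->
  hausdorff_lipschitz A g L' ->
  (forall a0, A a0 -> rcont_within A (fstar f g) a0) /\
  (forall a, A a -> (exists b, gstar f g a = [set b]) /\ usc_at A (gstar f g) a) /\
  (exists h : 'rV[R]_n -> 'rV[R]_m,
     (forall a, A a -> gstar f g a = [set h a]) /\
     (forall a0, A a0 -> vcont_within A h a0)) /\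
  (forall a1 a2, A a1 -> A a2 ->
     `|fstar f g a1 - fstar f g a2| <= (L + L * L') * enorm (a1 - a2)) /\
  (exists2 delta : R, 0 < delta &
     forall a1 a2 b1 b2, A a1 -> A a2 -> enorm (a1 - a2) < delta ->
       gstar f g a1 b1 -> gstar f g a2 b2 ->
       enorm (b1 - b2) <=
         (L' + 2 * Num.sqrt (4 / mu) * Num.sqrt (L + L * L'))
           * Num.sqrt (enorm (a1 - a2))).
Proof.
move=> mu0 L0 L'0 fc fsc fL gB gP gH.
have maxex : forall a, A a -> exists b, gstar f g a b.
  move=> a Aa; have [ne [cv cp]] := gP a Aa.
  have hc : forall x, g a x -> forall e, 0 < e -> exists2 d, 0 < d &
      forall y, g a y -> enorm (y - x) < d -> `|f a y - f a x| < e.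
    move=> x gx e e0; have [d d0 Hd] := fc a x Aa (gB a Aa x gx) e e0.
    exists d => // y gy hy; apply: Hd => //; first exact: (gB a Aa y gy).
    by rewrite subrr pnorm0l.
  have [b gb H] := attain_max ne cp hc.
  by exists b; split.
have fstarE : forall a b, gstar f g a b -> fstar f g a = f a b.
  move=> a b [gb Hb]; apply/le_anti/andP; split.
    apply: ge_sup; first by exists (f a b), b.
    by move=> _ [y gy <-]; exact: Hb.
  apply: ub_le_sup; last by exists b.
  by exists (f a b) => _ [y gy <-]; exact: Hb.
have near : forall a1 a2 b2, A a1 -> A a2 -> g a2 b2 ->
    exists2 b', g a1 b' & enorm (b' - b2) <= L' * enorm (a1 - a2).
  move=> a1 a2 b2 A1 A2 gb2.
  have [ne1 [_ cp1]] := gP a1 A1; have [ne2 [_ cp2]] := gP a2 A2.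
  have [b' gb' Hb'] := attain_min_dist b2 ne1 cp1.
  exists b' => //; rewrite enormB; apply: (le_trans _ (gH a1 a2 A1 A2)).
  have h1 : enorm (b2 - b') <= point_set_dist b2 (g a1).
    apply: lb_le_inf; first by exists (enorm (b2 - b')), b'.
    by move=> _ [y gy <-]; exact: Hb'.
  apply: (le_trans h1); rewrite /hausdorff_dist le_max; apply/orP; right.
  apply: ub_le_sup; last by exists b2.
  have [M2 HM2] := compact_enorm_bound cp2.
  have [z0 gz0] := ne1.
  exists (M2 + enorm (- z0)) => _ [y gy <-].
  have : point_set_dist y (g a1) <= enorm (y - z0).
    apply: ge_inf; last by exists z0.
    by exists 0 => _ [z _ <-]; exact: enorm_ge0.
  move=> /le_trans; apply; apply: (le_trans (enormD _ _)).
  by rewrite lerD2r HM2.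
have keyf : forall a1 a2 b1 b2, A a1 -> A a2 -> gstar f g a1 b1 -> gstar f g a2 b2 ->
    f a2 b2 - (L + L * L') * enorm (a1 - a2) <= f a1 b1.
  move=> a1 a2 b1 b2 A1 A2 [gb1 H1] [gb2 H2].
  have [b' gb' Hb'] := near a1 a2 b2 A1 A2 gb2.
  have := fL a1 a2 b' b2 A1 A2 (gB _ A1 _ gb') (gB _ A2 _ gb2).
  have hp : L * pnorm (a1 - a2) (b' - b2) <= (L + L * L') * enorm (a1 - a2).
    apply: (le_trans (ler_wpM2l L0 (pnorm_le _ _))).
    apply: (le_trans (ler_wpM2l L0 (lerD (lexx _) Hb'))).
    by rewrite mulrDr mulrDl mulrA.
  have := H1 b' gb'.
  rewrite ler_norml => hb /andP[hl hr]; lra.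
pose C := L' + 2 * Num.sqrt (4 / mu) * Num.sqrt (L + L * L').
have C0 : 0 <= C by rewrite addr_ge0 // !mulr_ge0 // sqrtr_ge0.
have keyg : forall a1 a2 b1 b2, A a1 -> A a2 -> enorm (a1 - a2) <= 1 ->
    gstar f g a1 b1 -> gstar f g a2 b2 ->
    enorm (b1 - b2) <= C * Num.sqrt (enorm (a1 - a2)).
  move=> a1 a2 b1 b2 A1 A2 d1 gs1 gs2.
  have gs1' := gs1; have gs2' := gs2.
  move: gs1' gs2' => [gb1 H1] [gb2 H2].
  set d := enorm (a1 - a2) in d1 *.
  have d0 : 0 <= d by exact: enorm_ge0.
  have [b' gb' Hb'] := near a1 a2 b2 A1 A2 gb2.
  set K := (L + L * L') * d.
  have K0 : 0 <= K by rewrite mulr_ge0 // addr_ge0 // mulr_ge0.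
  have hp : L * pnorm (a1 - a2) (b' - b2) <= K.
    apply: (le_trans (ler_wpM2l L0 (pnorm_le _ _))).
    apply: (le_trans (ler_wpM2l L0 (lerD (lexx _) Hb'))).
    by rewrite /K mulrDr mulrDl mulrA.
  have := fL a1 a2 b' b2 A1 A2 (gB _ A1 _ gb') (gB _ A2 _ gb2).
  rewrite ler_norml => /andP[hl hr].
  have k2 := keyf a2 a1 b2 b1 A2 A1 gs2 gs1.
  rewrite enormB -/d -/K in k2.
  have hdiff : f a1 b1 - f a1 b' <= 2 * K by lra.
  set E := enorm (b1 - b').
  have sc := fsc a1 A1 b1 b' (2^-1) (gB _ A1 _ gb1) (gB _ A1 _ gb') _ _.
  have mid := mid_in (proj1 (proj2 (gP a1 A1))) gb1 gb'.
  move: sc => /(_ _ (gB _ A1 _ mid)) sc.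
  have {sc} sc' : mu / 2 / 2 * (1 - 2^-1) * E ^+ 2 + (2^-1 * f a1 b1 + (1 - 2^-1) * f a1 b') <=
     f a1 (2^-1 *: b1 + (1 - 2^-1) *: b').
    rewrite addrC; apply: sc; apply/andP; split; first by rewrite invr_ge0 ler0n.
    by rewrite invf_le1 // ler1n.
  have hmid := H1 _ mid.
  rewrite -/E in sc'.
  have eq : mu / 2 / 2 * (1 - 2^-1) * E ^+ 2 = mu * E ^+ 2 / 8 by field.
  rewrite eq in sc'.
  have hP : mu * E ^+ 2 <= 8 * K.
    move: sc' hmid hdiff; set P := mu * E ^+ 2; lra.
  rewrite -/d in Hb'.
  have hE : E <= 2 * Num.sqrt (4 / mu) * Num.sqrt (L + L * L') * Num.sqrt d.
    apply: le_sq_le; first exact: enorm_ge0.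
      by rewrite !mulr_ge0 // sqrtr_ge0.
    have -> : (2 * Num.sqrt (4 / mu) * Num.sqrt (L + L * L') * Num.sqrt d) ^+ 2
        = 16 * K / mu.
      rewrite !exprMn !sqr_sqrtr ?divr_ge0 ?addr_ge0 ?mulr_ge0 ?(ltW mu0) //.
      by rewrite /K; field; rewrite gt_eqF.
    rewrite ler_pdivlMr //; rewrite mulrC in hP; lra.
  have sd : d <= Num.sqrt d.
    have s0 := sqrtr_ge0 d.
    have s1 : Num.sqrt d <= 1 by rewrite -sqrtr1 ler_sqrt.
    have := ler_wpM2r s0 s1; rewrite mul1r => h.
    by rewrite -{1}(sqr_sqrtr d0) expr2.
  have hE' : enorm (b' - b2) <= L' * Num.sqrt d.
    exact: (le_trans Hb' (ler_wpM2l L'0 sd)).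
  apply: (le_trans (enorm_tri b1 b' b2)); rewrite -/E /C mulrDl.
  lra.
have lip : forall a1 a2, A a1 -> A a2 ->
    `|fstar f g a1 - fstar f g a2| <= (L + L * L') * enorm (a1 - a2).
  move=> a1 a2 A1 A2; have [b1 gs1] := maxex a1 A1; have [b2 gs2] := maxex a2 A2.
  rewrite (fstarE _ _ gs1) (fstarE _ _ gs2).
  have k1 := keyf a1 a2 b1 b2 A1 A2 gs1 gs2.
  have k2 := keyf a2 a1 b2 b1 A2 A1 gs2 gs1.
  rewrite enormB in k2; rewrite ler_norml; apply/andP; split; lra.
pose h := fun a => xget 0 (gstar f g a).
have hP : forall a, A a -> gstar f g a (h a) := fun a Aa => xgetPex 0 (maxex a Aa).
have huniq : forall a b, A a -> gstar f g a b -> b = h a.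
  move=> a b Aa gs.
  have := keyg a a b (h a) Aa Aa _ gs (hP a Aa).
  rewrite subrr enorm0 sqrtr0 mulr0 => /(_ ler01) hb.
  apply/eqP; rewrite -subr_eq0; apply/eqP; apply: enorm_eq0.
  by apply/le_anti; rewrite hb enorm_ge0.
have hset : forall a, A a -> gstar f g a = [set h a].
  move=> a Aa; apply/seteqP; split => b /=; first by move=> gs; exact: huniq.
  by move=> ->; exact: hP.
have hcont : forall a0, A a0 -> vcont_within A h a0.
  move=> a0 A0 e e0.
  have C1 : 0 < C + 1 by lra.
  have eC : 0 < e / (C + 1) by rewrite divr_gt0.
  exists (Num.min 1 ((e / (C + 1)) ^+ 2)).
    by rewrite lt_min ltr01 /= exprn_gt0.
  move=> a Aa; rewrite lt_min => /andP[ha1 ha2].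
  have := keyg a a0 (h a) (h a0) Aa A0 (ltW ha1) (hP a Aa) (hP a0 A0).
  set s := Num.sqrt (enorm (a - a0)) => hk.
  have s0 : 0 <= s := sqrtr_ge0 _.
  have hs : s < e / (C + 1).
    have : s < Num.sqrt ((e / (C + 1)) ^+ 2) by rewrite /s ltr_sqrt // exprn_gt0.
    by rewrite sqrtr_sqr ger0_norm // ltW.
  move: hs; rewrite ltr_pdivlMr // => hs.
  apply: (le_lt_trans hk); lra.
have LL : 0 <= L + L * L' by rewrite addr_ge0 // mulr_ge0.
split.
  move=> a0 A0 e e0.
  have L1 : 0 < L + L * L' + 1 by lra.
  exists (e / (L + L * L' + 1)); first by rewrite divr_gt0.
  move=> a Aa; rewrite ltr_pdivlMr // => ha.
  apply: (le_lt_trans (lip a a0 Aa A0)).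
  have := enorm_ge0 (a - a0); lra.
split.
  move=> a Aa; split; first by exists (h a); exact: hset.
  move=> V oV sub.
  have Vh : V (h a) by apply: sub; rewrite hset.
  rewrite openE in oV.
  have /nbhs_ballP [r r0 Hr] := oV _ Vh.
  have [d d0 Hd] := hcont a Aa r r0.
  exists d => // a' Aa' ha'; rewrite hset // => y -> ; apply: Hr.
  rewrite -ball_normE /= distrC.
  exact: (le_lt_trans (mxnorm_le _) (Hd a' Aa' ha')).
split; first by exists h; split.
split; first exact: lip.
exists 1 => // a1 a2 b1 b2 A1 A2 d1 gs1 gs2.
exact: (keyg a1 a2 b1 b2 A1 A2 (ltW d1) gs1 gs2).
Qed.
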